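(* Let $\kappa$ be a regular uncountable cardinal, let $J$ be a $\kappa$-complete ideal on $\kappa$ with $NS_\kappa \subseteq J$, and let $\eta$ be an infinite ordinal less than $Depth([\kappa]^\kappa, \searrow)$ (respectively, less than $Depth([\kappa]^\kappa, \nearrow)$). Suppose that $\clubsuit^{\rm ev}_\kappa[J]$ holds. Then there exists a descending (respectively, ascending) $(J, I_\kappa)$-tower of length $\eta$.
   Context: An ideal on $\kappa$ is a nonempty $J \subseteq P(\kappa)$ with $\kappa \notin J$, every bounded subset of $\kappa$ in $J$, $J$ closed under subsets and under unions of two members. $J^+ = P(\kappa)\setminus J$. $J$ is $\kappa$-complete if the union of fewer than $\kappa$ members of $J$ is in $J$. $I_\kappa$ is the ideal of bounded subsets of $\kappa$, $NS_\kappa$ the nonstationary ideal, $[\kappa]^\kappa$ the set of subsets of $\kappa$ of size $\kappa$, and $acc(\kappa)$ the set of nonzero limit ordinals below $\kappa$. $\clubsuit^{\rm ev}_\kappa[J]$ asserts the existence of $s_\alpha \subseteq \alpha$ with $\sup s_\alpha = \alpha$ for $\alpha \in acc(\kappa)$ such that $\{\alpha \in acc(\kappa) : \exists \beta < \alpha\, (s_\alpha \setminus \beta \subseteq A)\} \in J^+$ for all $A \in [\kappa]^\kappa$. For an ideal $J$ on $\kappa$, $Y \subseteq P(\kappa)$ and an ordinal $\delta$, a descending (respectively, ascending) $(J,Y)$-tower of length $\delta$ is a sequence $\langle A_\alpha : \alpha < \delta\rangle$ with each $A_\alpha \in J^+$ such that whenever $\alpha < \beta < \delta$: $A_\beta \setminus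 A_\alpha \in Y$ and $A_\alpha \setminus A_\beta \in J^+$ (respectively, $A_\alpha \setminus A_\beta \in Y$ and $A_\beta \setminus A_\alpha \in J^+$). $Depth([\kappa]^\kappa, \nearrow)$ (respectively, $Depth([\kappa]^\kappa, \searrow)$) is the least ordinal $\eta$ such that there is no ascending (respectively, descending) $(I_\kappa, I_\kappa)$-tower of length $\eta$. *)

(* Defs.v *)
(* Ordinals are modelled as types carrying a strict well-order;
   subsets of kappa as predicates K -> Prop; ideals as predicates on subsets. *)
From Stdlib Require Import List.

Set Implicit Arguments.
Unset Strict Implicit.

Definition is_wellorder (T : Type) (lt : T -> T -> Prop) : Prop :=
  (forall x, ~ lt x x) /\
  (forall x y z, lt x y -> lt y z -> lt x z) /\
  (forall x y, lt x y \/ x = y \/ lt y x) /\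
  well_founded lt.

Definition injective_fun (A B : Type) (f : A -> B) : Prop :=
  forall x y, f x = f y -> x = y.

Definition injects (A B : Type) : Prop := exists f : A -> B, injective_fun f.

Definition finite_type (T : Type) : Prop := exists l : list T, forall x, In x l.

Section Kappa.
Variables (K : Type) (lt : K -> K -> Prop).

Definition bounded (A : K -> Prop) : Prop := exists g, forall x, A x -> lt x g.

Definition size_kappa (A : K -> Prop) : Prop :=
  exists f : K -> K, injective_fun f /\ forall x, A (f x).

Definition regular_uncountable_cardinal : Prop :=
  is_wellorder lt /\
  (* initial ordinal: every proper initial segment has smaller cardinality *)
  (forall a, ~ exists f : K -> K, injective_fun f /\ forall x, lt (f x) a) /\
  ~ injects K nat /\
  (* regular: every unbounded subset has size kappa *)
  (forall X : K -> Prop, ~ bounded X -> size_kappa X).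

(* nonzero limit ordinals below kappa *)
Definition acc (a : K) : Prop :=
  (exists b, lt b a) /\ (forall b, lt b a -> exists d, lt b d /\ lt d a).

Definition is_ideal (J : (K -> Prop) -> Prop) : Prop :=
  (exists A, J A) /\
  ~ J (fun _ => True) /\
  (forall A, bounded A -> J A) /\
  (forall A B : K -> Prop, J A -> (forall x, B x -> A x) -> J B) /\
  (forall A B, J A -> J B -> J (fun x => A x \/ B x)).

Definition positive (J : (K -> Prop) -> Prop) (A : K -> Prop) : Prop := ~ J A.

(* union of fewer than kappa members of J is in J *)
Definition kappa_complete (J : (K -> Prop) -> Prop) : Prop :=
  forall (I : Type) (F : I -> K -> Prop),
    injects I K -> ~ injects K I ->
    (forall i, J (F i)) -> J (fun x => exists i, F i x).

Definition closed_set (C : K -> Prop) : Prop :=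
  forall g, acc g ->
    (forall a, lt a g -> exists b, C b /\ lt a b /\ lt b g) -> C g.

Definition club (C : K -> Prop) : Prop := closed_set C /\ ~ bounded C.

Definition nonstationary (A : K -> Prop) : Prop :=
  exists C, club C /\ forall x, C x -> ~ A x.

Definition contains_NS (J : (K -> Prop) -> Prop) : Prop :=
  forall A, nonstationary A -> J A.

Definition clubsuit_ev (J : (K -> Prop) -> Prop) : Prop :=
  exists s : K -> K -> Prop,
    (forall a, acc a ->
       (forall x, s a x -> lt x a) /\
       (forall b, lt b a -> exists x, s a x /\ lt b x)) /\
    (forall A, size_kappa A ->
       positive J (fun a => acc a /\
         exists b, lt b a /\ forall x, s a x -> ~ lt x b -> A x)).

Definition desc_tower (J Y : (K -> Prop) -> Prop)
    (D : Type) (ltD : D -> D -> Prop) (A : D -> K -> Prop) : Prop :=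
  (forall a, positive J (A a)) /\
  (forall a b, ltD a b ->
     Y (fun x => A b x /\ ~ A a x) /\ positive J (fun x => A a x /\ ~ A b x)).

Definition asc_tower (J Y : (K -> Prop) -> Prop)
    (D : Type) (ltD : D -> D -> Prop) (A : D -> K -> Prop) : Prop :=
  (forall a, positive J (A a)) /\
  (forall a b, ltD a b ->
     Y (fun x => A a x /\ ~ A b x) /\ positive J (fun x => A b x /\ ~ A a x)).

End Kappa.

(* (X, ltX) has order type <= that of (E, ltE): order-isomorphic to an initial
   segment of E *)
Definition ord_le (X E : Type) (ltX : X -> X -> Prop) (ltE : E -> E -> Prop) : Prop :=
  exists f : X -> E,
    (forall x y, ltX x y -> ltE (f x) (f y)) /\
    (forall e x, ltE e (f x) -> exists y, f y = e) .

(* eta < Depth([kappa]^kappa, \searrow): since Depth is the least ordinal with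
   no descending (I_kappa, I_kappa)-tower, this says every ordinal xi <= eta
   carries such a tower. *)
Definition below_depth_desc (K : Type) (lt : K -> K -> Prop)
    (E : Type) (ltE : E -> E -> Prop) : Prop :=
  forall (X : Type) (ltX : X -> X -> Prop), is_wellorder ltX -> ord_le ltX ltE ->
    exists A : X -> K -> Prop,
      desc_tower (bounded lt) (bounded lt) ltX A.

Definition below_depth_asc (K : Type) (lt : K -> K -> Prop)
    (E : Type) (ltE : E -> E -> Prop) : Prop :=
  forall (X : Type) (ltX : X -> X -> Prop), is_wellorder ltX -> ord_le ltX ltE ->
    exists A : X -> K -> Prop,
      asc_tower (bounded lt) (bounded lt) ltX A.

(* Main.v *)
Require Import Defs.
From Stdlib Require Import List Classical.

Section Aux.
Variables (K : Type) (lt : K -> K -> Prop).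
Hypothesis irr : forall x, ~ lt x x.
Hypothesis tr : forall x y z, lt x y -> lt y z -> lt x z.
Hypothesis tot : forall x y, lt x y \/ x = y \/ lt y x.

Lemma max2 a b c : lt a c -> lt b c -> exists m, lt m c /\
  (forall x, lt x a -> lt x m) /\ (forall x, lt x b -> lt x m).
Proof.
  intros ha hb. destruct (tot a b) as [h|[h|h]].
  - exists b; split; [exact hb| split; eauto].
  - subst; exists b; eauto.
  - exists a; split; [exact ha| split; eauto].
Qed.

Variable s : K -> K -> Prop.
Hypothesis hs : forall a, acc lt a ->
       (forall x, s a x -> lt x a) /\
       (forall b, lt b a -> exists x, s a x /\ lt b x).

Definition T (B : K -> Prop) : K -> Prop :=
  fun a => acc lt a /\ exists b, lt b a /\ forall x, s a x -> ~ lt x b -> B x.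

Lemma T_sub (B C : K -> Prop) g h : lt g h ->
  (forall x, B x /\ ~ C x -> lt x g) ->
  forall a, T B a /\ ~ T C a -> lt a h.
Proof.
  intros gh Hg a [[Ha [b [ba Hb]]] HC].
  destruct (tot a g) as [q|[q|q]]; [eauto| subst; auto|].
  exfalso; apply HC. split; [exact Ha|].
  destruct (max2 _ _ _ ba q) as [m [ma [m1 m2]]].
  exists m; split; [exact ma|]. intros x sx nx.
  apply NNPP; intro nC.
  assert (Bx : B x) by (apply Hb; auto).
  apply nx, m2, Hg; auto.
Qed.

Lemma T_diff (B C : K -> Prop) :
  forall a, T (fun x => B x /\ ~ C x) a -> T B a /\ ~ T C a.
Proof.
  intros a [Ha [b [ba Hb]]]. split.
  - split; [exact Ha|]. exists b; split; [exact ba|]. intros x sx nx; apply Hb; auto.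
  - intros [_ [b' [b'a Hb']]].
    destruct (max2 _ _ _ ba b'a) as [m [ma [m1 m2]]].
    destruct (proj2 (hs _ Ha) m ma) as [x [sx mx]].
    assert (n1 : ~ lt x b) by (intro q; apply (irr _ (tr _ _ _ (m1 _ q) mx))).
    assert (n2 : ~ lt x b') by (intro q; apply (irr _ (tr _ _ _ (m2 _ q) mx))).
    destruct (Hb x sx n1) as [_ nC]. apply nC, Hb'; auto.
Qed.
End Aux.

Theorem theorem2p31 (K : Type) (lt : K -> K -> Prop) (J : (K -> Prop) -> Prop) :
  regular_uncountable_cardinal lt ->
  is_ideal lt J -> kappa_complete J -> contains_NS lt J ->
  clubsuit_ev lt J ->
  forall (E : Type) (ltE : E -> E -> Prop),
    is_wellorder ltE -> ~ finite_type E ->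
    (below_depth_desc lt ltE ->
       exists A : E -> K -> Prop, desc_tower J (bounded lt) ltE A) /\
    (below_depth_asc lt ltE ->
       exists A : E -> K -> Prop, asc_tower J (bounded lt) ltE A).
Proof.
  intros [[irr [tr [tot _]]] [_ [unc reg]]] [_ [_ [_ [mono _]]]] _ _ [s [hs club]]
    E ltE wE _.
  assert (nomax : forall g, exists h, lt g h).
  { intro g. apply NNPP; intro N.
    assert (nb : ~ bounded lt (fun x => x = g)).
    { intros [h Hh]. apply N; exists h; auto. }
    destruct (reg _ nb) as [f [fi fg]].
    apply unc. exists (fun _ => 0). intros x y _. apply fi. rewrite (fg x), (fg y); auto. }
  assert (pos : forall B, ~ bounded lt B -> positive J (@T K lt s B)).
  { intros B nb. apply club, reg, nb. }
  assert (posd : forall B C, ~ bounded lt (fun x => B x /\ ~ C x) ->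
      positive J (fun a => @T K lt s B a /\ ~ @T K lt s C a)).
  { intros B C nb HJ. apply (pos _ nb). eapply mono; [exact HJ|].
    apply T_diff; auto. }
  assert (bd : forall B C, bounded lt (fun x => B x /\ ~ C x) ->
      bounded lt (fun a => @T K lt s B a /\ ~ @T K lt s C a)).
  { intros B C [g Hg]. destruct (nomax g) as [h gh]. exists h.
    eapply T_sub; eauto. }
  assert (ordE : ord_le ltE ltE).
  { exists (fun x => x); split; eauto. }
  split.
  - intro D. destruct (D E ltE wE ordE) as [B [Bp Bt]].
    exists (fun a => @T K lt s (B a)). split.
    + intro a. apply pos, Bp.
    + intros a b ab. destruct (Bt a b ab) as [h1 h2]. split.
      * apply bd, h1.
      * apply posd, h2.
  - intro D. destruct (D E ltE wE ordE) as [B [Bp Bt]].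
    exists (fun a => @T K lt s (B a)). split.
    + intro a. apply pos, Bp.
    + intros a b ab. destruct (Bt a b ab) as [h1 h2]. split.
      * apply bd, h1.
      * apply posd, h2.
Qed.
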